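(* Let $k$ be a real division algebra, $\mathcal Z\subset k$ a discrete subring closed under conjugation, $(a_n)_{n\ge1}$ a sequence in $\mathcal Z$ and $x_0\in k$ with $x_n=T_{a_n}\cdots T_{a_1}x_0$ defined and $\|x_n\|<1$ for all $n\ge0$. Then for every $n$ the product \[\prod_{i=0}^{n-1}\|T^{-1}_{a_{i+1}}\cdots T^{-1}_{a_n}0\|\] is well-defined, and these products are bounded above uniformly in $n$.
   Context: $k\in\{\mathbb{R},\mathbb{C},\mathbb{H},\mathbb{O}\}$, identified with $\mathbb{R}^d$ with Euclidean norm $\|x\|^2=x\overline x$. For $a\in\mathcal Z$, $T_ax=x^{-1}-a$ and $T_a^{-1}x=(x+a)^{-1}$. Discrete means discrete in $\mathbb{R}^d$. *)

(* Defs.v *)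
From Stdlib Require Import Reals Lra.
Open Scope R_scope.

(* The real division algebras R, C, H, O realised by the Cayley-Dickson
   construction: CD 0 = R, CD 1 = C, CD 2 = H, CD 3 = O, with CD n
   identified with R^(2^n) (coordinates = the nested pairs). *)
Fixpoint CD (n : nat) : Type :=
  match n with O => R | S m => (CD m * CD m)%type end.

Fixpoint cd0 (n : nat) : CD n :=
  match n return CD n with O => 0 | S m => (cd0 m, cd0 m) end.

Fixpoint cd1 (n : nat) : CD n :=
  match n return CD n with O => 1 | S m => (cd1 m, cd0 m) end.

Fixpoint cdadd (n : nat) : CD n -> CD n -> CD n :=
  match n return CD n -> CD n -> CD n with
  | O => fun x y => x + y
  | S m => fun x y => (cdadd m (fst x) (fst y), cdadd m (snd x) (snd y))
  end.

Fixpoint cdopp (n : nat) : CD n -> CD n :=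
  match n return CD n -> CD n with
  | O => fun x => - x
  | S m => fun x => (cdopp m (fst x), cdopp m (snd x))
  end.

Definition cdsub (n : nat) (x y : CD n) : CD n := cdadd n x (cdopp n y).

Fixpoint cdscale (n : nat) (r : R) : CD n -> CD n :=
  match n return CD n -> CD n with
  | O => fun x => r * x
  | S m => fun x => (cdscale m r (fst x), cdscale m r (snd x))
  end.

Fixpoint cdconj (n : nat) : CD n -> CD n :=
  match n return CD n -> CD n with
  | O => fun x => x
  | S m => fun x => (cdconj m (fst x), cdopp m (snd x))
  end.

Fixpoint cdmul (n : nat) : CD n -> CD n -> CD n :=
  match n return CD n -> CD n -> CD n with
  | O => fun x y => x * y
  | S m => fun x y =>
      (cdsub m (cdmul m (fst x) (fst y)) (cdmul m (cdconj m (snd y)) (snd x)),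
       cdadd m (cdmul m (snd y) (fst x)) (cdmul m (snd x) (cdconj m (fst y))))
  end.

(* squared Euclidean norm (sum of squares of the 2^n coordinates) = x conj(x) *)
Fixpoint cdsqnorm (n : nat) : CD n -> R :=
  match n return CD n -> R with
  | O => fun x => x * x
  | S m => fun x => cdsqnorm m (fst x) + cdsqnorm m (snd x)
  end.

Definition cdnorm (n : nat) (x : CD n) : R := sqrt (cdsqnorm n x).

Definition cdinv (n : nat) (x : CD n) : CD n :=
  cdscale n (/ cdsqnorm n x) (cdconj n x).

Definition Tmap (n : nat) (a x : CD n) : option (CD n) :=
  if Req_EM_T (cdnorm n x) 0 then None else Some (cdsub n (cdinv n x) a).

Definition Tinvmap (n : nat) (a x : CD n) : option (CD n) :=
  if Req_EM_T (cdnorm n (cdadd n x a)) 0 then None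
  else Some (cdinv n (cdadd n x a)).

(* orbit a x0 m = x_m = T_{a_m} ... T_{a_1} x0 (None if undefined);
   the sequence (a_n)_{n>=1} is a : nat -> CD n, a 0 unused. *)
Fixpoint orbit (n : nat) (a : nat -> CD n) (x0 : CD n) (m : nat) : option (CD n) :=
  match m with
  | O => Some x0
  | S m' => match orbit n a x0 m' with
            | Some x => Tmap n (a (S m')) x
            | None => None
            end
  end.

(* chain a i k = T^{-1}_{a_{i+1}} ... T^{-1}_{a_{i+k}} 0  (None if undefined) *)
Fixpoint chain (n : nat) (a : nat -> CD n) (i k : nat) : option (CD n) :=
  match k with
  | O => Some (cd0 n)
  | S k' => match chain n a (S i) k' with
            | Some y => Tinvmap n (a (S i)) y
            | None => None
            end
  end.

Definition optnorm (n : nat) (y : option (CD n)) : R :=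
  match y with Some x => cdnorm n x | None => 0 end.

Fixpoint prod_upto (f : nat -> R) (m : nat) : R :=
  match m with O => 1 | S m' => prod_upto f m' * f m' end.

Definition is_subring (n : nat) (Z : CD n -> Prop) : Prop :=
  Z (cd0 n) /\ Z (cd1 n) /\
  (forall x y, Z x -> Z y -> Z (cdadd n x y)) /\
  (forall x, Z x -> Z (cdopp n x)) /\
  (forall x y, Z x -> Z y -> Z (cdmul n x y)).

Definition conj_closed (n : nat) (Z : CD n -> Prop) : Prop :=
  forall x, Z x -> Z (cdconj n x).

Definition discrete (n : nat) (Z : CD n -> Prop) : Prop :=
  forall z, Z z -> exists eps, 0 < eps /\
    forall w, Z w -> cdnorm n (cdsub n w z) < eps -> w = z.

(* Main.v *)
Require Import Defs.
From Stdlib Require Import Reals Lra Lia.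
Open Scope R_scope.

Lemma pair_eq {A B : Type} (a c : A) (b d : B) : a = c -> b = d -> (a,b) = (c,d).
Proof. intros; subst; reflexivity. Qed.
Ltac destr_all := repeat match goal with p : CD (S _) |- _ => destruct p end.
Ltac brute := intros n Hn; destruct n as [|[|[|[|n]]]]; [ | | | | lia ]; intros;
  destr_all; simpl; unfold cdsub; simpl;
  (repeat apply pair_eq); (try match goal with |- @eq (CD 0) ?a ?b => change (@eq R a b) end); ring.

Lemma B1 : forall n, (n <= 3)%nat -> forall x y z : CD n,
  cdmul n (cdadd n x y) z = cdadd n (cdmul n x z) (cdmul n y z).
Proof. brute. Qed.
Lemma B2 : forall n, (n <= 3)%nat -> forall r (x z : CD n),
  cdmul n (cdscale n r x) z = cdscale n r (cdmul n x z).
Proof. brute. Qed.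
Lemma B3 : forall n, (n <= 3)%nat -> forall x z : CD n,
  cdmul n (cdconj n x) (cdmul n x z) = cdscale n (cdsqnorm n x) z.
Proof. brute. Qed.
Lemma B4 : forall n, (n <= 3)%nat -> forall x y : CD n,
  cdsqnorm n (cdmul n x y) = cdsqnorm n x * cdsqnorm n y.
Proof. brute. Qed.
Lemma B5 : forall n, (n <= 3)%nat -> forall z : CD n,
  cdmul n (cd0 n) z = cd0 n.
Proof. brute. Qed.

Fixpoint cddot (n : nat) : CD n -> CD n -> R :=
  match n return CD n -> CD n -> R with
  | O => fun x y => x * y
  | S m => fun x y => cddot m (fst x) (fst y) + cddot m (snd x) (snd y)
  end.

Ltac gen := let n := fresh "n" in let IH := fresh "IH" in
  intros n; induction n as [|n IH]; simpl; intros;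
  [ | repeat match goal with p : (_ * _)%type |- _ => destruct p end; simpl in *].

Lemma N_nonneg : forall n (x : CD n), 0 <= cdsqnorm n x.
Proof. gen. nra. pose proof (IH c); pose proof (IH c0); lra. Qed.

Lemma N_zero : forall n (x : CD n), cdsqnorm n x = 0 -> x = cd0 n.
Proof. gen. nra. pose proof (N_nonneg n c); pose proof (N_nonneg n c0).
  rewrite (IH c), (IH c0); auto; lra. Qed.

Lemma N_cd0 : forall n, cdsqnorm n (cd0 n) = 0.
Proof. gen. ring. rewrite IH; ring. Qed.
Lemma N_cd1 : forall n, cdsqnorm n (cd1 n) = 1.
Proof. gen. ring. rewrite IH, N_cd0; ring. Qed.

Lemma add_opp0 : forall n (x : CD n), cdadd n x (cdopp n (cd0 n)) = x.
Proof. gen. ring. rewrite !IH; reflexivity. Qed.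
Lemma addsub : forall n (w a : CD n), cdadd n (cdadd n w (cdopp n a)) a = w.
Proof. gen. ring. rewrite !IH; reflexivity. Qed.
Lemma subadd : forall n (x y a : CD n),
  cdadd n (cdadd n x a) (cdopp n (cdadd n y a)) = cdadd n x (cdopp n y).
Proof. gen. ring. rewrite !IH; reflexivity. Qed.
Lemma cancel : forall n (x y a : CD n), cdadd n y a = cd0 n ->
  cdadd n x (cdopp n y) = cdadd n x a.
Proof. gen. lra. injection H as H1 H2. rewrite (IH _ _ _ H1), (IH _ _ _ H2). reflexivity. Qed.
Lemma opp_opp : forall n (x : CD n), cdopp n (cdopp n x) = x.
Proof. gen. ring. rewrite !IH; reflexivity. Qed.
Lemma conj_conj : forall n (x : CD n), cdconj n (cdconj n x) = x.
Proof. gen. reflexivity. rewrite IH, opp_opp; reflexivity. Qed.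
Lemma opp_scale : forall n r (x : CD n), cdopp n (cdscale n r x) = cdscale n r (cdopp n x).
Proof. gen. ring. rewrite !IH; reflexivity. Qed.
Lemma conj_scale : forall n r (x : CD n), cdconj n (cdscale n r x) = cdscale n r (cdconj n x).
Proof. gen. ring. rewrite IH, opp_scale; reflexivity. Qed.
Lemma scale_scale : forall n r q (x : CD n), cdscale n r (cdscale n q x) = cdscale n (r*q) x.
Proof. gen. ring. rewrite !IH; reflexivity. Qed.
Lemma scale1 : forall n (x : CD n), cdscale n 1 x = x.
Proof. gen. ring. rewrite !IH; reflexivity. Qed.
Lemma N_scale : forall n r (x : CD n), cdsqnorm n (cdscale n r x) = r*r*cdsqnorm n x.
Proof. gen. ring. rewrite !IH; ring. Qed.
Lemma N_opp : forall n (x : CD n), cdsqnorm n (cdopp n x) = cdsqnorm n x.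
Proof. gen. ring. rewrite !IH; ring. Qed.
Lemma N_conj : forall n (x : CD n), cdsqnorm n (cdconj n x) = cdsqnorm n x.
Proof. gen. ring. rewrite IH, N_opp; ring. Qed.
Lemma sub_scale : forall n al be (u v : CD n),
  cdadd n (cdscale n al u) (cdopp n (cdscale n be v)) = cdadd n (cdscale n al u) (cdscale n (-be) v).
Proof. gen. ring. rewrite !IH; reflexivity. Qed.
Lemma N_lin : forall n al be (u v : CD n),
  cdsqnorm n (cdadd n (cdscale n al u) (cdscale n be v)) =
  al*al*cdsqnorm n u + be*be*cdsqnorm n v + 2*al*be*cddot n u v.
Proof. gen. ring. rewrite !IH; ring. Qed.
Lemma dot_opp : forall n (u v : CD n), cddot n (cdopp n u) (cdopp n v) = cddot n u v.
Proof. gen. ring. rewrite !IH; ring. Qed.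
Lemma dot_conj : forall n (u v : CD n), cddot n (cdconj n u) (cdconj n v) = cddot n u v.
Proof. gen. ring. rewrite IH, dot_opp; ring. Qed.
Lemma N_sub : forall n (x y : CD n),
  cdsqnorm n (cdadd n x (cdopp n y)) = cdsqnorm n x + cdsqnorm n y - 2 * cddot n x y.
Proof. gen. ring. rewrite !IH; ring. Qed.

Lemma inv_diff : forall n (t s : CD n), cdsqnorm n t <> 0 -> cdsqnorm n s <> 0 ->
  cdsqnorm n (cdsub n (cdinv n t) (cdinv n s)) = cdsqnorm n (cdsub n t s) / (cdsqnorm n t * cdsqnorm n s).
Proof.
  intros. unfold cdsub, cdinv. rewrite sub_scale, N_lin, !N_conj, dot_conj, N_sub. field; auto.
Qed.

Lemma N_inv : forall n (x : CD n), cdsqnorm n x <> 0 -> cdsqnorm n (cdinv n x) = / cdsqnorm n x.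
Proof. intros. unfold cdinv. rewrite N_scale, N_conj. field; auto. Qed.

Lemma inv_inv : forall n (x : CD n), cdsqnorm n x <> 0 -> cdinv n (cdinv n x) = x.
Proof.
  intros. unfold cdinv at 1. rewrite N_inv by auto. unfold cdinv.
  rewrite conj_scale, conj_conj, scale_scale.
  replace (/ / cdsqnorm n x * / cdsqnorm n x) with 1 by (field; auto). apply scale1.
Qed.

Lemma norm_zero : forall n (x : CD n), cdnorm n x = 0 <-> cdsqnorm n x = 0.
Proof.
  intros. unfold cdnorm. split; intro H.
  - apply sqrt_eq_0; auto. apply N_nonneg.
  - rewrite H. apply sqrt_0.
Qed.

Fixpoint cdpow (n : nat) (z : CD n) (k : nat) : CD n :=
  match k with O => cd1 n | S k' => cdmul n z (cdpow n z k') end.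

Lemma Z_ge1 : forall n, (n <= 3)%nat -> forall Z : CD n -> Prop,
  is_subring n Z -> discrete n Z -> forall z, Z z -> cdsqnorm n z <> 0 -> 1 <= cdsqnorm n z.
Proof.
  intros n Hn Z HZ Hd z Hz Hnz.
  destruct HZ as [Z0 [Z1 [Zadd [Zopp Zmul]]]].
  destruct (Rle_or_lt 1 (cdsqnorm n z)) as [h|h]; auto. exfalso.
  destruct (Hd _ Z0) as [eps [Heps Hw]].
  assert (Hp : forall k, Z (cdpow n z k) /\ cdsqnorm n (cdpow n z k) = cdsqnorm n z ^ k).
  { induction k; simpl. split; auto. apply N_cd1.
    destruct IHk as [A B]. split; auto. rewrite B4, B; auto. }
  pose proof (N_nonneg n z) as Hz0.
  destruct (pow_lt_1_zero (cdsqnorm n z)) with (y := eps*eps) as [K HK].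
  { rewrite Rabs_right; lra. }
  { nra. }
  specialize (HK K (Nat.le_refl K)). destruct (Hp K) as [A B].
  assert (E : cdpow n z K = cd0 n).
  { apply Hw; auto. unfold cdnorm, cdsub. rewrite add_opp0, B.
    rewrite <- (sqrt_square eps) by lra. apply sqrt_lt_1_alt.
    split. apply pow_le; lra. rewrite Rabs_right in HK; auto. apply Rle_ge, pow_le; lra. }
  rewrite E, N_cd0 in B. symmetry in B. apply pow_nonzero in B; auto.
Qed.

Fixpoint prod_from (f : nat -> R) (j k : nat) : R :=
  match k with O => 1 | S k' => f j * prod_from f (S j) k' end.

Lemma prod_from_S : forall f k j, prod_from f j (S k) = prod_from f j k * f (j + k)%nat.
Proof.
  induction k; intros j; simpl. rewrite Nat.add_0_r; ring.
  simpl in IHk. rewrite IHk. replace (S j + k)%nat with (j + S k)%nat by lia. ring.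
Qed.

Lemma prod_upto_from : forall f m, prod_upto f m = prod_from f 0 m.
Proof. induction m. reflexivity. rewrite prod_from_S. simpl. rewrite IHm. reflexivity. Qed.

Lemma orbit_step : forall n a x0 j x x', orbit n a x0 j = Some x -> orbit n a x0 (S j) = Some x' ->
  cdsqnorm n x <> 0 /\ x' = cdsub n (cdinv n x) (a (S j)).
Proof.
  intros. simpl in H0. rewrite H in H0. unfold Tmap in H0.
  destruct (Req_EM_T (cdnorm n x) 0); [discriminate|]. injection H0 as <-.
  split; auto. intro E. apply n0, norm_zero; auto.
Qed.

Lemma sq_lt1 : forall r, 0 <= r -> sqrt r < 1 -> r < 1.
Proof.
  intros r Hr H. destruct (Rlt_or_le r 1); auto. exfalso.
  pose proof (sqrt_le_1_alt 1 r H0). rewrite sqrt_1 in H1. lra.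
Qed.

Lemma main_inv : forall n, (n <= 3)%nat -> forall (Z : CD n -> Prop),
  is_subring n Z -> discrete n Z ->
  forall (a : nat -> CD n), (forall m, (1 <= m)%nat -> Z (a m)) -> forall x0 : CD n,
  (forall m, exists x, orbit n a x0 m = Some x /\ cdnorm n x < 1) ->
  forall m xm, orbit n a x0 m = Some xm ->
  forall k j, (j + k = m)%nat -> exists y u, chain n a j k = Some y /\ Z u /\ Z (cdmul n y u) /\
    cdnorm n u * prod_from (fun i => optnorm n (chain n a i (m - i))) j k = 1 /\
    cdsqnorm n u <> 0 /\
    (forall x, orbit n a x0 j = Some x -> cdsqnorm n (cdsub n x y) * cdsqnorm n u <= cdsqnorm n xm).
Proof.
  intros n Hn Z HZ Hd a Ha x0 Hx m xm Hxm.
  pose proof HZ as HZ'. destruct HZ' as [Z0 [Z1 [Zadd [Zopp Zmul]]]].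
  induction k as [|k IH]; intros j Hjk.
  - rewrite Nat.add_0_r in Hjk. subst j.
    exists (cd0 n), (cd1 n). simpl. repeat split; auto.
    + unfold cdnorm. rewrite N_cd1, sqrt_1. ring.
    + rewrite N_cd1; lra.
    + intros x Hxx. rewrite Hxx in Hxm. injection Hxm as ->. unfold cdsub.
      rewrite add_opp0, N_cd1. lra.
  - destruct (IH (S j) ltac:(lia)) as [y' [u' [Hc [Hu' [Hyu' [Hp [Hnu' Hd']]]]]]].
    destruct (Hx j) as [xj [Oj Nj]].
    destruct (Hx (S j)) as [xj1 [Oj1 Nj1]].
    destruct (orbit_step _ _ _ _ _ _ Oj Oj1) as [Hxj0 Exj1].
    pose proof (Hd' _ Oj1) as D1.
    assert (Hxm1 : cdsqnorm n xm < 1).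
    { destruct (Hx m) as [xm' [Om Nm]]. rewrite Om in Hxm. injection Hxm as ->.
      apply sq_lt1; auto. apply N_nonneg. }
    assert (Hu1 : 1 <= cdsqnorm n u') by (apply (Z_ge1 n Hn Z); auto).
    assert (Nxj : cdsqnorm n xj < 1) by (apply sq_lt1; auto; apply N_nonneg).
    assert (Nxj0 : 0 < cdsqnorm n xj) by (pose proof (N_nonneg n xj); lra).
    assert (Et : cdadd n xj1 (a (S j)) = cdinv n xj).
    { rewrite Exj1. unfold cdsub. apply addsub. }
    set (s := cdadd n y' (a (S j))).
    assert (Hs : cdsqnorm n s <> 0).
    { intro E. apply N_zero in E.
      assert (E2 : cdsub n xj1 y' = cdinv n xj) by (unfold cdsub; rewrite (cancel _ _ _ _ E); auto).
      rewrite E2, N_inv in D1 by auto.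
      pose proof (N_nonneg n (cdsub n xj1 y')).
      assert (1 < / cdsqnorm n xj).
      { rewrite <- Rinv_1. apply Rinv_lt_contravar; lra. }
      nra. }
    assert (Hch : chain n a j (S k) = Some (cdinv n s)).
    { simpl. rewrite Hc. unfold Tinvmap. fold s.
      destruct (Req_EM_T (cdnorm n s) 0) as [e|e]; auto.
      exfalso. apply Hs, norm_zero; auto. }
    pose proof (N_nonneg n s) as Hs0.
    pose proof (N_nonneg n u') as Hu0.
    exists (cdinv n s), (cdmul n s u'). repeat split.
    + exact Hch.
    + unfold s. rewrite B1 by auto. apply Zadd; [auto | apply Zmul; auto; apply Ha; lia].
    + unfold cdinv. rewrite B2, B3, scale_scale by auto.
      replace (/ cdsqnorm n s * cdsqnorm n s) with 1 by (field; auto). rewrite scale1; auto.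
    + simpl. replace (m - j)%nat with (S k) by lia. rewrite Hch. simpl.
      rewrite <- Rmult_assoc. unfold cdnorm at 1 2.
      rewrite <- sqrt_mult_alt by (rewrite B4 by auto; nra).
      rewrite B4, N_inv by auto.
      replace (cdsqnorm n s * cdsqnorm n u' * / cdsqnorm n s) with (cdsqnorm n u') by (field; auto).
      exact Hp.
    + rewrite B4 by auto. intro E. apply Rmult_integral in E. destruct E; [apply Hs; auto | lra].
    + intros x Hxx. rewrite Oj in Hxx. injection Hxx as <-.
      rewrite <- (inv_inv n xj) by lra. rewrite <- Et.
      assert (Ht : cdsqnorm n (cdadd n xj1 (a (S j))) = / cdsqnorm n xj) by (rewrite Et, N_inv; lra).
      rewrite inv_diff; [| rewrite Ht; apply Rinv_neq_0_compat; lra | auto].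
      unfold cdsub at 1. unfold s. rewrite subadd. fold s. fold (cdsub n xj1 y').
      rewrite Ht, B4 by auto.
      replace (cdsqnorm n (cdsub n xj1 y') / (/ cdsqnorm n xj * cdsqnorm n s) *
        (cdsqnorm n s * cdsqnorm n u')) with
        ((cdsqnorm n (cdsub n xj1 y') * cdsqnorm n u') * cdsqnorm n xj) by (field; split; lra).
      pose proof (N_nonneg n (cdsub n xj1 y')). pose proof (N_nonneg n xm).
      assert (0 <= cdsqnorm n (cdsub n xj1 y') * cdsqnorm n u') by nra.
      nra.
Qed.

Theorem lemma1p5 (n : nat) (Hn : (n <= 3)%nat) (Z : CD n -> Prop)
  (HZ : is_subring n Z) (Hconj : conj_closed n Z) (Hdisc : discrete n Z)
  (a : nat -> CD n) (Ha : forall m, (1 <= m)%nat -> Z (a m)) (x0 : CD n)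
  (Hx : forall m, exists x, orbit n a x0 m = Some x /\ cdnorm n x < 1) :
  (forall m i, (i < m)%nat -> chain n a i (m - i) <> None) /\
  exists C, forall m, prod_upto (fun i => optnorm n (chain n a i (m - i))) m <= C.
Proof.
  split.
  - intros m i Him. destruct (Hx m) as [xm [Om _]].
    destruct (main_inv n Hn Z HZ Hdisc a Ha x0 Hx m xm Om (m - i) i ltac:(lia)) as [y [u [Hc _]]].
    rewrite Hc; discriminate.
  - exists 1. intros m. destruct (Hx m) as [xm [Om _]].
    destruct (main_inv n Hn Z HZ Hdisc a Ha x0 Hx m xm Om m 0 ltac:(lia))
      as [y [u [Hc [Hu [_ [Hp [Hnu _]]]]]]].
    rewrite prod_upto_from.
    assert (H1 : 1 <= cdsqnorm n u) by (apply (Z_ge1 n Hn Z); auto).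
    assert (H2 : 1 <= cdnorm n u).
    { unfold cdnorm. rewrite <- sqrt_1. apply sqrt_le_1_alt. auto. }
    set (P := prod_from _ 0 m) in *.
    assert (0 <= P) by nra. nra.
Qed.
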